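(* Let $\mathcal{H} = \bigotimes_{i=1}^n \mathcal{H}_i$, $H \in \mathrm{Herm}(\mathcal{H})$, $\mathcal{A}$ an ancillary Hilbert space and $H' \in \mathrm{Herm}(\mathcal{H}\otimes\mathcal{A})$. If $(H',\mathcal{A})$ is an $(\eta,\epsilon)$-gadget for $H$, then $(H',\mathcal{A})$ satisfies the $(\zeta,\epsilon)$-gadget property for $H$ with $\zeta = O(\eta)$.
   Context: $\|\cdot\|$ denotes the operator norm, $\mathrm{Proj}(\cdot)$ the set of orthogonal projectors and $\mathrm{U}(\cdot)$ the unitary group. $(H',\mathcal{A})$ is an $(\eta,\epsilon)$-gadget for $H$ if there exist $P \in \mathrm{Proj}(\mathcal{A})\setminus\{0\}$ and $U \in \mathrm{U}(\mathcal{H}\otimes\mathcal{A})$ with $\|U - \mathbb{I}\| \le \eta$ and $\|P'H'P' - U(H\otimes P)U^\dagger\| \le \epsilon$, where $P' = U(\mathbb{I}\otimes P)U^\dagger$. $(H',\mathcal{A})$ satisfies the $(\zeta,\epsilon)$-gadget property for $H$ if there exist $P' \in \mathrm{Proj}(\mathcal{H}\otimes\mathcal{A})$ and $\tilde P \in \mathrm{Proj}(\mathcal{A})\setminus\{0\}$ such that for every $H_{\mathrm{else}} \in \mathrm{Herm}(\mathcal{H})$ there is a unitary $\tilde U_{H_{\mathrm{else}}} \in \mathrm{U}(\mathcal{H}\otimes\mathcal{A})$ with $\|P'(H' + H_{\mathrm{else}}\otimes\mathbb{I})P' - \tilde U_{H_{\mathrm{else}}}((H+H_{\mathrm{else}})\otimes\tilde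 P)\tilde U_{H_{\mathrm{else}}}^\dagger\| \le \epsilon + \zeta\|H_{\mathrm{else}}\|$. *)

(* Defs.v *)
From HB Require Import structures.
From mathcomp Require Import all_boot all_order all_algebra.
From mathcomp Require Import complex mxtens.
From mathcomp Require Import boolp classical_sets reals.
Set Implicit Arguments. Unset Strict Implicit. Unset Printing Implicit Defensive.
Import Order.TTheory GRing.Theory Num.Theory.
Local Open Scope ring_scope.
Local Open Scope complex_scope.

(* Finite-dimensional Hilbert spaces are C^d with C = R[i] (R : realType),
   operators are d x d complex matrices. *)

Section QDefs.
Variable R : realType.
Local Notation C := R[i].

Definition adjmx {m n} (A : 'M[C]_(m, n)) : 'M[C]_(n, m) := map_mx conjc A^T.

Definition vnorm {n} (v : 'cV[C]_n) : R :=
  Num.sqrt (\sum_(i < n) (Normc.normc (v i 0)) ^+ 2).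

Definition opnorm {m n} (A : 'M[C]_(m, n)) : R :=
  sup [set vnorm (A *m v) | v in [set v : 'cV[C]_n | vnorm v <= 1]]%classic.

Definition herm_op {n} (A : 'M[C]_n) : Prop := adjmx A = A.
Definition proj_op {n} (P : 'M[C]_n) : Prop := P *m P = P /\ adjmx P = P.
Definition unitary_op {n} (U : 'M[C]_n) : Prop := U *m adjmx U = 1%:M.

(* (eta, eps)-gadget: H acts on C^d, the ancilla is C^m, H' on C^d (x) C^m. *)
Definition is_gadget {d m} (H : 'M[C]_d) (H' : 'M[C]_(d * m)) (eta eps : R) :=
  exists (P : 'M[C]_m) (U : 'M[C]_(d * m)),
    [/\ proj_op P, P != 0, unitary_op U, opnorm (U - 1%:M) <= eta &
     let P' := U *m (1%:M *t P) *m adjmx U in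
     opnorm (P' *m H' *m P' - U *m (H *t P) *m adjmx U) <= eps].

Definition gadget_property {d m} (H : 'M[C]_d) (H' : 'M[C]_(d * m))
    (zeta eps : R) :=
  exists (P' : 'M[C]_(d * m)) (Pt : 'M[C]_m),
    [/\ proj_op P', proj_op Pt, Pt != 0 &
     forall Helse : 'M[C]_d, herm_op Helse ->
       exists Ut : 'M[C]_(d * m), unitary_op Ut /\
         opnorm (P' *m (H' + Helse *t 1%:M) *m P'
                 - Ut *m ((H + Helse) *t Pt) *m adjmx Ut)
         <= eps + zeta * opnorm Helse].
End QDefs.

(* Main.v *)
Require Import Defs.
From HB Require Import structures.
From mathcomp Require Import all_boot all_order all_algebra.
From mathcomp Require Import complex mxtens.
From mathcomp Require Import boolp classical_sets reals.
From mathcomp Require Import lra ring.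
Import Order.TTheory GRing.Theory Num.Theory.
Local Open Scope ring_scope.

Section Q.
Variable R : realType.
Local Notation C := R[i].
Local Notation nc := (@Normc.normc R).

Lemma nc_ge0 (z : C) : 0 <= nc z.
Proof. by case: z => a b /=; rewrite sqrtr_ge0. Qed.

Lemma nc2 (z : C) : ((nc z) ^+ 2)%:C%C = conjc z * z.
Proof.
case: z => a b /=; rewrite sqr_sqrtr ?addr_ge0 ?sqr_ge0 //.
apply/eqP; rewrite eq_complex /=; apply/andP; split; apply/eqP.
  by rewrite mulNr opprK !expr2.
by rewrite mulNr mulrC addrN.
Qed.

Definition sq {n} (v : 'cV[C]_n) : R := \sum_(i < n) (nc (v i 0)) ^+ 2.

Lemma sq_ge0 {n} (v : 'cV[C]_n) : 0 <= sq v.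
Proof. by apply: sumr_ge0 => i _; rewrite sqr_ge0. Qed.

Lemma vnormE {n} (v : 'cV[C]_n) : vnorm v = Num.sqrt (sq v).
Proof. by []. Qed.

Lemma vnorm_ge0 {n} (v : 'cV[C]_n) : 0 <= vnorm v.
Proof. exact: sqrtr_ge0. Qed.

Lemma vnorm_sq {n} (v : 'cV[C]_n) : vnorm v ^+ 2 = sq v.
Proof. by rewrite vnormE sqr_sqrtr // sq_ge0. Qed.

Lemma sqC {n} (v : 'cV[C]_n) : ((sq v)%:C)%C = (adjmx v *m v) 0 0.
Proof.
rewrite /sq rmorph_sum !mxE; apply: eq_bigr => i _.
rewrite /adjmx !mxE; exact: nc2.
Qed.

Lemma vnorm_eq0 {n} (v : 'cV[C]_n) : vnorm v = 0 -> v = 0.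
Proof.
move/eqP; rewrite sqrtr_eq0 => h.
have h0 : sq v = 0 by apply/eqP; rewrite eq_le h sq_ge0.
move: h0 => /psumr_eq0P h1.
apply/matrixP => i j; rewrite ord1 mxE.
have := h1 (fun _ _ => sqr_ge0 _) i isT; move=> /eqP; rewrite sqrf_eq0 => /eqP.
exact: Normc.eq0_normc.
Qed.

Lemma sqZ {n} (c : C) (v : 'cV[C]_n) : sq (c *: v) = nc c ^+ 2 * sq v.
Proof.
rewrite /sq mulr_sumr; apply: eq_bigr => i _.
by rewrite mxE Normc.normcM exprMn.
Qed.

Lemma vnormZ {n} (c : C) (v : 'cV[C]_n) : vnorm (c *: v) = nc c * vnorm v.
Proof.
rewrite !vnormE sqZ sqrtrM ?sqr_ge0 // sqrtr_sqr ger0_norm //; exact: nc_ge0.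
Qed.

Lemma vnormN {n} (v : 'cV[C]_n) : vnorm (- v) = vnorm v.
Proof.
rewrite !vnormE /sq; congr Num.sqrt; apply: eq_bigr => i _.
by rewrite mxE normcN.
Qed.

Lemma cs {n} (a b : 'I_n -> R) :
  \sum_i a i * b i <= Num.sqrt (\sum_i a i ^+ 2) * Num.sqrt (\sum_i b i ^+ 2).
Proof.
set A := \sum_i a i ^+ 2; set B := \sum_i b i ^+ 2.
have A0 : 0 <= A by apply: sumr_ge0 => i _; rewrite sqr_ge0.
have B0 : 0 <= B by apply: sumr_ge0 => i _; rewrite sqr_ge0.
set s := Num.sqrt A; set t := Num.sqrt B.
have s0 : 0 <= s by apply: sqrtr_ge0.
have t0 : 0 <= t by apply: sqrtr_ge0.
have sA : s ^+ 2 = A by rewrite sqr_sqrtr.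
have tB : t ^+ 2 = B by rewrite sqr_sqrtr.
have key : forall i, 2 * (s * t) * (a i * b i) <= t ^+ 2 * a i ^+ 2 + s ^+ 2 * b i ^+ 2.
  move=> i; have := sqr_ge0 (t * a i - s * b i); nra.
have sum1 : 2 * (s * t) * (\sum_i a i * b i) <= 2 * (s * t) ^+ 2.
  rewrite mulr_sumr.
  apply: (le_trans (ler_sum _ (fun i _ => key i))).
  rewrite big_split /= -!mulr_sumr -/A -/B -sA -tB; nra.
have [st0|] := ltP 0 (s * t).
  nra.
rewrite le_eqVlt => /orP[/eqP st|]; last by move=> h; exfalso; nra.
have : s = 0 \/ t = 0.
  by move/eqP: st; rewrite mulf_eq0 => /orP[/eqP->|/eqP->]; [left|right].
case=> [e|e].
  have : A = 0 by rewrite -sA e expr0n.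
  move/psumr_eq0P => h; rewrite big1 ?st // => i _.
  by have := h (fun _ _ => sqr_ge0 _) i isT => /eqP; rewrite sqrf_eq0 => /eqP ->; rewrite mul0r.
have : B = 0 by rewrite -tB e expr0n.
move/psumr_eq0P => h; rewrite big1 ?st // => i _.
by have := h (fun _ _ => sqr_ge0 _) i isT => /eqP; rewrite sqrf_eq0 => /eqP ->; rewrite mulr0.
Qed.

Lemma vnormD {n} (u w : 'cV[C]_n) : vnorm (u + w) <= vnorm u + vnorm w.
Proof.
have h0 : 0 <= vnorm u + vnorm w by rewrite addr_ge0 ?vnorm_ge0.
rewrite -(ger0_norm h0) -sqrtr_sqr vnormE ler_sqrt ?sqr_ge0 //.
rewrite sqrrD !vnorm_sq.
have cs1 : \sum_i nc (u i 0) * nc (w i 0) <= vnorm u * vnorm w.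
  exact: (cs (fun i => nc (u i 0)) (fun i => nc (w i 0))).
apply: le_trans (_ : \sum_i (nc (u i 0) + nc (w i 0)) ^+ 2 <= _).
  apply: ler_sum => i _; rewrite mxE; apply: lerXn2r.
  - by rewrite nnegrE nc_ge0.
  - by rewrite nnegrE addr_ge0 ?nc_ge0.
  - exact: le_normcD.
under eq_bigr do rewrite sqrrD.
rewrite !big_split /= -/(sq u) -/(sq w) mulr2n.
by apply: lerD => //; apply: lerD => //; apply: lerD.
Qed.

Lemma vnormB {n} (u w : 'cV[C]_n) : vnorm (u - w) <= vnorm u + vnorm w.
Proof. by rewrite -(vnormN w) vnormD. Qed.

Lemma nc_le_vnorm {n} (v : 'cV[C]_n) i : nc (v i 0) <= vnorm v.
Proof.
rewrite -(ger0_norm (nc_ge0 _)) -sqrtr_sqr vnormE ler_sqrt ?sq_ge0 //.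
rewrite /sq (bigD1 i) //= lerDl; apply: sumr_ge0 => j _; exact: sqr_ge0.
Qed.

Lemma vnorm_sum {n I} (r : seq I) (F : I -> 'cV[C]_n) :
  vnorm (\sum_(j <- r) F j) <= \sum_(j <- r) vnorm (F j).
Proof.
elim: r => [|x r IH]; first by rewrite !big_nil vnormE /sq big1 ?sqrtr0 // => i _; rewrite mxE Normc.normc0 expr0n.
rewrite !big_cons; apply: le_trans (vnormD _ _) _; exact: lerD.
Qed.

Lemma vnorm0 n : vnorm (0 : 'cV[C]_n) = 0.
Proof. by rewrite vnormE /sq big1 ?sqrtr0 // => i _; rewrite mxE Normc.normc0 expr0n. Qed.

Lemma vnorm_bound {m n} (A : 'M[C]_(m, n)) :
  exists K, 0 <= K /\ forall v, vnorm (A *m v) <= K * vnorm v.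
Proof.
exists (\sum_j vnorm (col j A)); split.
  by apply: sumr_ge0 => j _; exact: vnorm_ge0.
move=> v.
have -> : A *m v = \sum_j v j 0 *: col j A.
  apply/matrixP => i k; rewrite ord1 !mxE summxE; apply: eq_bigr => j _.
  by rewrite !mxE mulrC.
apply: le_trans (vnorm_sum _ _) _.
rewrite mulr_suml; apply: ler_sum => j _; rewrite vnormZ mulrC.
apply: ler_wpM2l; [exact: vnorm_ge0 | exact: nc_le_vnorm].
Qed.

Lemma nc_real (c : R) : 0 <= c -> nc (c%:C)%C = c.
Proof. by move=> c0 /=; rewrite expr0n addr0 sqrtr_sqr ger0_norm. Qed.

Lemma opnorm_has_sup {m n} (A : 'M[C]_(m, n)) :
  has_sup [set vnorm (A *m v) | v in [set v : 'cV[C]_n | vnorm v <= 1]]%classic.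
Proof.
split.
  exists (vnorm (A *m 0)); exists 0 => //=; by rewrite vnorm0.
have [K [K0 HK]] := vnorm_bound A.
exists K => _ [v /= v1 <-].
apply: le_trans (HK v) _; rewrite -[leRHS]mulr1; exact: ler_wpM2l.
Qed.

Lemma opnorm_ub {m n} (A : 'M[C]_(m, n)) v : vnorm v <= 1 -> vnorm (A *m v) <= opnorm A.
Proof. by move=> v1; apply: (sup_upper_bound (opnorm_has_sup A)); exists v. Qed.

Lemma opnorm_ge0 {m n} (A : 'M[C]_(m, n)) : 0 <= opnorm A.
Proof.
have := @opnorm_ub _ _ A 0; rewrite mulmx0 !vnorm0; apply; exact: ler01.
Qed.

Lemma opnorm_le {m n} (A : 'M[C]_(m, n)) k :
  (forall v, vnorm v <= 1 -> vnorm (A *m v) <= k) -> opnorm A <= k.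
Proof.
move=> h; apply: ge_sup; first by case: (opnorm_has_sup A).
by move=> _ [v /= v1 <-]; exact: h.
Qed.

Lemma opnorm_vec {m n} (A : 'M[C]_(m, n)) v : vnorm (A *m v) <= opnorm A * vnorm v.
Proof.
have [/vnorm_eq0 ->|nz] := eqVneq (vnorm v) 0.
  by rewrite mulmx0 vnorm0 vnorm0 mulr0.
have vp : 0 < vnorm v by rewrite lt0r nz vnorm_ge0.
set c := (vnorm v)^-1.
have c0 : 0 <= c by rewrite invr_ge0 vnorm_ge0.
have h := @opnorm_ub _ _ A ((c%:C)%C *: v).
rewrite vnormZ nc_real // mulVf // lexx -scalemxAr vnormZ nc_real // in h.
have := h isT; rewrite /c => h2.
have ip : 0 < (vnorm v)^-1 by rewrite invr_gt0.
by rewrite -(ler_pM2l ip) mulrA mulrAC mulVf // mul1r.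
Qed.

Lemma opnorm_le2 {m n} (A : 'M[C]_(m, n)) k : 0 <= k ->
  (forall v, vnorm (A *m v) <= k * vnorm v) -> opnorm A <= k.
Proof.
move=> k0 h; apply: opnorm_le => v v1; apply: le_trans (h v) _.
rewrite -[leRHS]mulr1; exact: ler_wpM2l.
Qed.

Lemma opnormM {m n p} (A : 'M[C]_(m, n)) (B : 'M[C]_(n, p)) :
  opnorm (A *m B) <= opnorm A * opnorm B.
Proof.
apply: opnorm_le2; first by rewrite mulr_ge0 ?opnorm_ge0.
move=> v; rewrite -mulmxA; apply: le_trans (opnorm_vec _ _) _.
rewrite -mulrA; apply: ler_wpM2l; [exact: opnorm_ge0| exact: opnorm_vec].
Qed.

Lemma opnormD {m n} (A B : 'M[C]_(m, n)) : opnorm (A + B) <= opnorm A + opnorm B.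
Proof.
apply: opnorm_le2; first by rewrite addr_ge0 ?opnorm_ge0.
move=> v; rewrite mulmxDl mulrDl; apply: le_trans (vnormD _ _) _.
by apply: lerD; exact: opnorm_vec.
Qed.

Lemma opnormB {m n} (A B : 'M[C]_(m, n)) : opnorm (A - B) <= opnorm A + opnorm B.
Proof.
apply: opnorm_le2; first by rewrite addr_ge0 ?opnorm_ge0.
move=> v; rewrite mulmxBl mulrDl; apply: le_trans (vnormB _ _) _.
by apply: lerD; exact: opnorm_vec.
Qed.

Lemma adjmxM {m n p} (A : 'M[C]_(m, n)) (B : 'M[C]_(n, p)) :
  adjmx (A *m B) = adjmx B *m adjmx A.
Proof. by rewrite /adjmx trmx_mul map_mxM. Qed.

Lemma adjmxK {m n} (A : 'M[C]_(m, n)) : adjmx (adjmx A) = A.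
Proof. by apply/matrixP => i j; rewrite !mxE conjcK. Qed.

Lemma adjmxB {m n} (A B : 'M[C]_(m, n)) : adjmx (A - B) = adjmx A - adjmx B.
Proof. by apply/matrixP => i j; rewrite !mxE rmorphB. Qed.

Lemma vnorm_sq_eq {n k} (u : 'cV[C]_n) (w : 'cV[C]_k) :
  (adjmx u *m u) 0 0 = (adjmx w *m w) 0 0 -> vnorm u = vnorm w.
Proof. by rewrite -!sqC => /complexI e; rewrite !vnormE e. Qed.

Lemma opnorm_iso {k n} (U : 'M[C]_(k, n)) : adjmx U *m U = 1%:M -> opnorm U <= 1.
Proof.
move=> hU; apply: opnorm_le2 => // v; rewrite mul1r le_eqVlt; apply/orP; left.
apply/eqP/vnorm_sq_eq.
by rewrite adjmxM -mulmxA (mulmxA (adjmx U)) hU mul1mx.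
Qed.

Lemma opnorm_proj {n} (P : 'M[C]_n) : P *m P = P -> adjmx P = P -> opnorm P <= 1.
Proof.
move=> hPP hP; apply: opnorm_le2 => // v; rewrite mul1r.
set a := P *m v; set b := v - P *m v.
have e : (adjmx v *m v) 0 0 = (adjmx a *m a) 0 0 + (adjmx b *m b) 0 0.
  have ea : adjmx a *m a = adjmx v *m P *m v.
    by rewrite /a adjmxM hP mulmxA -(mulmxA _ P P) hPP.
  have eb : adjmx b *m b = adjmx v *m v - adjmx v *m P *m v.
    rewrite /b adjmxB adjmxM hP mulmxBl !mulmxBr !mulmxA -(mulmxA _ P P) hPP.
    by rewrite subrr subr0.
  rewrite ea eb !mxE; ring.
have : (sq v)%:C%C = (sq a + sq b)%:C%C.
  by rewrite rmorphD /= !sqC e.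
move/complexI => e2.
rewrite !vnormE ler_sqrt ?sq_ge0 // e2 lerDl; exact: sq_ge0.
Qed.

Lemma sum_tens {p m} (F : 'I_(p * m) -> R) :
  \sum_(k < p * m) F k = \sum_(i < p) \sum_(j < m) F (mxtens_index (i, j)).
Proof.
rewrite pair_big /=.
rewrite (reindex (@mxtens_index p m)) /=; last first.
  by exists (@mxtens_unindex p m) => x _; rewrite (mxtens_indexK, mxtens_unindexK).
by apply: eq_bigr => -[i j].
Qed.

Lemma sum_tensC {p m} (F : 'I_(p * m) -> C) :
  \sum_(k < p * m) F k = \sum_(i < p) \sum_(j < m) F (mxtens_index (i, j)).
Proof.
rewrite pair_big /=.
rewrite (reindex (@mxtens_index p m)) /=; last first.
  by exists (@mxtens_unindex p m) => x _; rewrite (mxtens_indexK, mxtens_unindexK).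
by apply: eq_bigr => -[i j].
Qed.

Lemma opnorm_tens1 {p q m} (A : 'M[C]_(p, q)) :
  opnorm (A *t (1%:M : 'M[C]_m)) <= opnorm A.
Proof.
apply: opnorm_le2; first exact: opnorm_ge0.
move=> v.
pose vj (j : 'I_m) : 'cV[C]_q := \col_i v (mxtens_index (i, j)) 0.
have e : forall i j, ((A *t 1%:M) *m v) (mxtens_index (i, j)) 0 = (A *m vj j) i 0.
  move=> i j; rewrite !mxE sum_tensC; apply: eq_bigr => i' _.
  rewrite (bigD1 j) //= big1 ?addr0.
    by rewrite tensmxE !mxE eqxx mulr1.
  by move=> j' /negbTE nj; rewrite tensmxE mxE eq_sym nj mulr0 mul0r.
have e1 : sq ((A *t 1%:M) *m v) = \sum_(j < m) sq (A *m vj j).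
  rewrite /sq sum_tens exchange_big /=; apply: eq_bigr => j _.
  by apply: eq_bigr => i _; rewrite e.
have e2 : sq v = \sum_(j < m) sq (vj j).
  rewrite /sq sum_tens exchange_big /=; apply: eq_bigr => j _.
  by apply: eq_bigr => i _; rewrite mxE.
have h : sq ((A *t 1%:M) *m v) <= opnorm A ^+ 2 * sq v.
  rewrite e1 e2 mulr_sumr; apply: ler_sum => j _.
  rewrite -!vnorm_sq -exprMn; apply: lerXn2r.
  - by rewrite nnegrE vnorm_ge0.
  - by rewrite nnegrE mulr_ge0 ?opnorm_ge0 ?vnorm_ge0.
  - exact: opnorm_vec.
rewrite vnormE -(ger0_norm (opnorm_ge0 A)) -sqrtr_sqr -sqrtrM ?sqr_ge0 //.
by rewrite ler_sqrt // mulr_ge0 ?sqr_ge0 ?sq_ge0.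
Qed.

Lemma opnormM_le {m n p} (A : 'M[C]_(m, n)) (B : 'M[C]_(n, p)) a b :
  0 <= a -> opnorm A <= a -> opnorm B <= b -> opnorm (A *m B) <= a * b.
Proof.
move=> a0 hA hB; apply: le_trans (opnormM A B) _.
apply: le_trans (_ : a * opnorm B <= _).
  by apply: ler_wpM2r => //; exact: opnorm_ge0.
exact: ler_wpM2l.
Qed.

Lemma tensDl {p q r s} (A B : 'M[C]_(p, q)) (M : 'M[C]_(r, s)) :
  (A + B) *t M = A *t M + B *t M.
Proof. by apply/matrixP => i j; rewrite !mxE mulrDl. Qed.

Lemma subsub (V : zmodType) (a b c : V) : (a - c) - (b - c) = a - b.
Proof. by rewrite opprB addrA subrK. Qed.

Lemma main_lemma {d m} (H : 'M[C]_d) (H' : 'M[C]_(d * m)) eta eps :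
  is_gadget H H' eta eps -> gadget_property H H' (2 * eta) eps.
Proof.
move=> [P [U [[hPP hPa] Pn0 hU hUn hE]]].
move: hE => /=.
set Q := (1%:M : 'M[C]_d) *t P.
set P' := U *m Q *m adjmx U => hE.
have UtU : adjmx U *m U = 1%:M := mulmx1C hU.
have hQQ : Q *m Q = Q by rewrite /Q tensmx_mul mulmx1 hPP.
have hQa : adjmx Q = Q.
  by rewrite /Q /adjmx trmx_tens map_mxT trmx1 map_mx1 -/(adjmx P) hPa.
have P'U : P' *m U = U *m Q by rewrite /P' -mulmxA UtU mulmx1.
have UtP' : adjmx U *m P' = Q *m adjmx U by rewrite /P' !mulmxA UtU mul1mx.
have nU : opnorm U <= 1 := opnorm_iso U UtU.
have nUt : opnorm (adjmx U) <= 1 by apply: opnorm_iso; rewrite adjmxK.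
have nQ : opnorm Q <= 1 := opnorm_proj Q hQQ hQa.
have nP' : opnorm P' <= 1.
  have h1 := opnormM_le _ _ _ _ ler01 nU nQ; rewrite mulr1 in h1.
  by have := opnormM_le _ _ _ _ ler01 h1 nUt; rewrite mulr1.
have eta0 : 0 <= eta := le_trans (opnorm_ge0 _) hUn.
have pP' : proj_op P'.
  split; first by rewrite -mulmxA UtP' /P' !mulmxA -(mulmxA U Q Q) hQQ.
  by rewrite /P' !adjmxM adjmxK hQa mulmxA.
clearbody P'.
exists P', P; split => //.
move=> Helse _; exists U; split => //.
set X := Helse *t (1%:M : 'M[C]_m).
have eQXQ : Helse *t P = Q *m X *m Q.
  by rewrite /Q /X !tensmx_mul mul1mx !mulmx1 hPP.
set Y := X *m (U - 1%:M) - (U - 1%:M) *m X.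
have t1 : P' *m (X *m U) *m adjmx U *m P' = P' *m X *m P'.
  by rewrite -!mulmxA (mulmxA U) hU mul1mx.
have t2 : P' *m (U *m X) *m adjmx U *m P' = U *m (Q *m X *m Q) *m adjmx U.
  by rewrite !mulmxA P'U -!mulmxA UtP' !mulmxA.
have eD : P' *m Y *m adjmx U *m P' = P' *m X *m P' - U *m (Q *m X *m Q) *m adjmx U.
  have eY : Y = X *m U - U *m X by rewrite /Y mulmxBr mulmxBl mulmx1 mul1mx subsub.
  rewrite eY.
  by rewrite mulmxBr !mulmxBl t1 t2.
have eM : P' *m (H' + X) *m P' - U *m ((H + Helse) *t P) *m adjmx U =
  (P' *m H' *m P' - U *m (H *t P) *m adjmx U) + P' *m Y *m adjmx U *m P'.
  rewrite eD tensDl eQXQ mulmxDr !mulmxDl mulmxDr !mulmxDl.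
  by rewrite opprD addrACA.
rewrite eM; apply: le_trans (opnormD _ _) _.
have nX : opnorm X <= opnorm Helse := opnorm_tens1 Helse.
have nY : opnorm Y <= opnorm Helse * eta + eta * opnorm Helse.
  apply: le_trans (opnormB _ _) _; apply: lerD.
    by apply: opnormM_le => //; exact: opnorm_ge0.
  by apply: opnormM_le.
have y0 : 0 <= opnorm Helse * eta + eta * opnorm Helse.
  by rewrite addr_ge0 ?mulr_ge0 ?opnorm_ge0.
have a1 := opnormM_le _ _ _ _ ler01 nP' nY; rewrite mul1r in a1.
have a2 := opnormM_le _ _ _ _ y0 a1 nUt; rewrite mulr1 in a2.
have nD := opnormM_le _ _ _ _ y0 a2 nP'; rewrite mulr1 in nD.
have -> : 2 * eta * opnorm Helse = opnorm Helse * eta + eta * opnorm Helse by ring.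
exact: lerD hE nD.
Qed.
End Q.

Theorem theorem3p1 (R : realType) :
  exists c : R, 0 < c /\
  forall (n : nat) (dims : 'I_n -> nat) (m : nat)
    (H : 'M[R[i]]_(\prod_(k < n) dims k))
    (H' : 'M[R[i]]_((\prod_(k < n) dims k) * m)) (eta eps : R),
    herm_op H -> herm_op H' ->
    is_gadget H H' eta eps ->
    gadget_property H H' (c * eta) eps.
Proof.
exists 2; split => // n dims m H H' eta eps _ _; exact: main_lemma.
Qed.
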